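(* Let $l\ge 0$ be an integer and $v\in\{0,1\}$. Let $\mathcal{D}_{n}$ be the set of partitions into exactly $n$ distinct parts, and for $\pi=(\lambda_1,\lambda_2,\dots)$ let $\mathcal{O}(\pi)=\lambda_1+\lambda_3+\lambda_5+\cdots$. For integers $N\ge0$, $k\ge1$, $m\ge0$ let $\mathcal{P}_N(k,m)$ be the set of partitions $(\lambda_1,\dots,\lambda_N)$ into exactly $N$ parts with $\lambda_N\ge k$ and $\lambda_i-\lambda_{i+1}\ge m$ for $1\le i\le N-1$ ($\mathcal{P}_0(k,m)$ contains only the empty partition). For a partition $\pi=(\lambda_1,\dots,\lambda_N)$ with $N\ge1$ let \[\omega_{2,2}(\pi)=(\lambda_N-1)\prod_{i=1}^{N-1}(\lambda_i-\lambda_{i+1}-1),\qquad \tilde\omega_1(\pi)=\prod_{i=1}^{N-1}(\lambda_i-\lambda_{i+1}-1),\] and let $\omega_{2,2}$ of the empty partition be $1$. Then \[\sum_{\pi\in\mathcal{D}_{2l+v}}q^{\mathcal{O}(\pi)}=\sum_{\pi\in\mathcal{P}_{l+v}(2-v,2)}\big[(1-v)\,\omega_{2,2}(\pi)+v\,\tilde\omega_1(\pi)\big]q^{|\pi|}.\]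
   Context: A partition is a finite weakly decreasing sequence of positive integers; $|\pi|$ is the sum of its parts. *)

(* Defs.v *)
From mathcomp Require Import all_boot.
Set Implicit Arguments. Unset Strict Implicit. Unset Printing Implicit Defensive.

(* Partitions are represented as seq nat, listed (lambda_1, lambda_2, ...),
   i.e. index 0 holds lambda_1. *)

Definition is_partition (s : seq nat) : bool :=
  sorted geq s && all (fun x => 0 < x) s.

Definition in_D (n : nat) (s : seq nat) : bool :=
  is_partition s && sorted gtn s && (size s == n).

Definition Ostat (s : seq nat) : nat :=
  \sum_(i < size s | ~~ odd i) nth 0 s i.

Definition psize (s : seq nat) : nat := sumn s.

Definition in_P (N k m : nat) (s : seq nat) : bool :=
  [&& is_partition s, size s == N,
      (0 < N) ==> (k <= nth 0 s N.-1)
    & sorted (fun a b => b + m <= a) s].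

Definition gapprod (s : seq nat) : nat :=
  \prod_(i < (size s).-1) (nth 0 s i - nth 0 s i.+1 - 1).

Definition omega22 (s : seq nat) : nat :=
  if s is [::] then 1 else (nth 0 s (size s).-1 - 1) * gapprod s.

Definition omega1t (s : seq nat) : nat := gapprod s.

(* Coefficient of q^M in sum_{pi : P pi, size pi = len} w(pi) q^(stat pi).
   Sequences are enumerated with entries <= M; for both generating functions
   of the theorem the statistic dominates the largest part, so this bound
   does not drop any term. *)
Definition gf_coef (len M : nat) (P : seq nat -> bool) (stat w : seq nat -> nat)
  : nat :=
  \sum_(t : len.-tuple 'I_M.+1 | P (map val t) && (stat (map val t) == M))
     w (map val t).

(* Main.v *)
Require Import Defs.
From mathcomp Require Import all_boot zify.
Set Implicit Arguments. Unset Strict Implicit. Unset Printing Implicit Defensive.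
Fixpoint allseq (n B : nat) : seq (seq nat) :=
  if n is n'.+1 then [seq x :: s | x <- iota 0 B, s <- allseq n' B] else [:: [::]].

Lemma mem_allseq n B s : (s \in allseq n B) = (size s == n) && all (fun x => x < B) s.
Proof.
elim: n s => [|n IH] s /=.
  by case: s.
apply/allpairsP/idP.
  move=> [[x t] [/= Hx Ht ->]]; rewrite IH in Ht; rewrite mem_iota in Hx.
  case/andP: Ht => /eqP Hs Ha /=; rewrite Hs eqxx Ha andbT /=; lia.
case: s => [//|x t] /= /andP [Ht /andP [Hx Ha]].
exists (x, t); split => //=; first by rewrite mem_iota; lia.
by rewrite IH -(eqSS (size t)) Ht.
Qed.

Lemma uniq_allseq n B : uniq (allseq n B).
Proof.
elim: n => [//|n IH] /=.
apply: allpairs_uniq => //; first exact: iota_uniq.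
by move=> [a b] [c d] _ _ /= [-> ->].
Qed.

Lemma tuple_sum n b (P : pred (seq nat)) (F : seq nat -> nat) :
 \sum_(t : n.-tuple 'I_b.+1 | P (map val t)) F (map val t)
 = \sum_(s <- allseq n b.+1 | P s) F s.
Proof.
have Hp : perm_eq (allseq n b.+1) [seq map val (t : seq 'I_b.+1) | t : n.-tuple 'I_b.+1 <- index_enum _].
  apply: uniq_perm; first exact: uniq_allseq.
    rewrite map_inj_uniq ?index_enum_uniq //.
    by move=> t1 t2 /(inj_map val_inj) /val_inj.
  move=> s; rewrite mem_allseq; apply/idP/mapP.
    case/andP => /eqP Hs Ha.
    have Hs' : size (map (@inord b) s) == n by rewrite size_map Hs.
    exists (Tuple Hs'); first exact: mem_index_enum.
    rewrite /= -map_comp -[LHS]map_id; apply/eq_in_map => x Hx /=.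
    by rewrite inordK //; move/allP: Ha => /(_ x Hx).
  move=> [t _ ->]; rewrite size_map size_tuple eqxx /=.
  by apply/allP => x /mapP [y _ ->].
by rewrite (perm_big _ Hp) big_map.
Qed.

Definition Dc (c : nat) (s : seq nat) : bool := path gtn c s && all (fun x => 0 < x) s.

Fixpoint Oalt (s : seq nat) : nat :=
  match s with [::] => 0 | [:: x] => x | x :: y :: t => x + Oalt t end.

Definition Eodd (s : seq nat) : nat := \sum_(i < size s | odd i) nth 0 s i.

Lemma Ostat_cons x s : Ostat (x :: s) = x + Eodd s.
Proof. rewrite /Ostat (_ : size (x :: s) = (size s).+1) // big_mkcond big_ord_recl; congr (_ + _); rewrite /Eodd [RHS]big_mkcond; apply: eq_bigr => i _ /=; by rewrite negbK. Qed.

Lemma Eodd_cons x s : Eodd (x :: s) = Ostat s.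
Proof. rewrite /Eodd (_ : size (x :: s) = (size s).+1) // big_mkcond big_ord_recl /= /Ostat [RHS]big_mkcond. rewrite add0n; apply: eq_bigr => i _; by rewrite add0n. Qed.

Lemma Ostat_nil : Ostat [::] = 0.
Proof. by apply: big1 => -[]. Qed.
Lemma Eodd_nil : Eodd [::] = 0.
Proof. by apply: big1 => -[]. Qed.

Lemma OstatE s : Ostat s = Oalt s.
Proof.
have : Ostat s = Oalt s /\ forall x, Ostat (x :: s) = Oalt (x :: s).
  elim: s => [|x s [IH1 IH2]]; first by split => [|x]; rewrite ?Ostat_cons ?Ostat_nil ?Eodd_nil ?addn0.
  split => // y; rewrite Ostat_cons Eodd_cons IH1.
  by case: s IH1 IH2.
by case.
Qed.

Lemma gapprod_cc x y t : gapprod (x :: y :: t) = (x - y - 1) * gapprod (y :: t).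
Proof. by rewrite /gapprod big_ord_recl. Qed.

Lemma gapprod1 x : gapprod [:: x] = 1.
Proof. by rewrite /gapprod big_ord0. Qed.

Lemma omega22_cons x s : omega22 (x :: s) = (x - head 0 s - 1) * omega22 s.
Proof.
case: s => [|y t]; first by rewrite /omega22 gapprod1 /= subn0 muln1.
rewrite /omega22 gapprod_cc /=.
by rewrite mulnCA.
Qed.

Lemma omega1t_cons x y t : omega1t (x :: y :: t) = (x - y - 1) * omega1t (y :: t).
Proof. exact: gapprod_cc. Qed.

Lemma Dc_mono c d s : c <= d -> Dc c s -> Dc d s.
Proof. case: s => [//|x s] cd /andP[/= /andP[xc p] a]; rewrite /Dc /= p a; lia. Qed.

Lemma Dc_head x y s : Dc x s -> y < x -> (0 < y) && Dc y s = (head 0 s < y).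
Proof.
case: s => [|h t]; first by rewrite /Dc /= andbT.
move=> /andP[/= /andP[hx p] /andP[h0 a]] yx.
rewrite /Dc /= p h0 a !andbT; apply/idP/idP; [case/andP=>//|move=> hy; apply/andP; split=>//; lia].
Qed.

Lemma count_between a x B : x <= B ->
  \sum_(0 <= y < B | (a < y) && (y < x)) 1 = x - a - 1.
Proof.
move=> xB.
suff : forall B, \sum_(0 <= y < B | (a < y) && (y < x)) 1 = minn B x - a.+1.
  move=> ->; lia.
elim=> [|n IH]; first by rewrite big_geq // min0n.
rewrite big_mkcond big_nat_recr // -big_mkcond IH /=; case: ifP => /andP H; lia.
Qed.

Definition S B n c M := \sum_(s <- allseq n B | Dc c s && (Oalt s == M)) 1.
Definition T B (w : seq nat -> nat) n c M :=
  \sum_(s <- allseq n B | Dc c s && (sumn s == M)) w s.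

Lemma eq_sub x a M : (x + a == M) = (x <= M) && (a == M - x).
Proof. apply/eqP/andP => [H|[H /eqP H']]; [split; [lia|apply/eqP; lia]|lia]. Qed.

Lemma condS c x y s M :
  Dc c [:: x, y & s] && (Oalt [:: x, y & s] == M)
  = [&& x < c, y < x, 0 < y & x <= M] && (Dc y s && (Oalt s == M - x)).
Proof.
rewrite /Dc /= eq_sub.
case: (path _ y s); case: (all _ s); case: (Oalt s == M - x); rewrite ?andbF ?andbT //.
lia.
Qed.

Lemma S_step B n c M : S B n.+2 c M =
  \sum_(x <- iota 0 B) \sum_(y <- iota 0 B)
     (if [&& x < c, y < x, 0 < y & x <= M] then S B n y (M - x) else 0).
Proof.
rewrite /S /= big_mkcond big_allpairs_dep; apply: eq_bigr => x _.
rewrite big_allpairs_dep; apply: eq_bigr => y _.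
case: ifP => H.
  rewrite [RHS]big_mkcond; apply: eq_bigr => s _; by rewrite condS H.
by apply: big1 => s _; rewrite condS H.
Qed.

Lemma condT c x s M :
  Dc c (x :: s) && (sumn (x :: s) == M)
  = [&& x < c, 0 < x, x <= M & sumn s == M - x] && Dc x s.
Proof.
rewrite /Dc /= eq_sub.
case: (path _ x s); case: (all _ s); case: (sumn s == M - x); rewrite ?andbF ?andbT //; lia.
Qed.

Lemma T_step B w n c M :
  (forall x s, size s = n -> w (x :: s) = (x - head 0 s - 1) * w s) ->
  T B w n.+1 c M =
  \sum_(x <- iota 0 B) \sum_(y <- iota 0 B)
     (if [&& x < c, y < x, 0 < y & x <= M] then T B w n y (M - x) else 0).
Proof.
move=> Hw.
rewrite /T /= big_mkcond big_allpairs_dep; apply: eq_big_seq => x.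
rewrite mem_iota add0n => /andP [_ xB].
rewrite (eq_bigr (fun y => \sum_(s <- allseq n B)
   (if [&& x < c, y < x, 0 < y & x <= M] && (Dc y s && (sumn s == M - x)) then w s else 0))); last first.
  move=> y _; case: ifP => H; first by rewrite big_mkcond.
  by rewrite big1.
rewrite exchange_big; apply: eq_big_seq => s; rewrite mem_allseq => /andP [/eqP Hs _].
rewrite condT Hw //.
rewrite -big_mkcond (eq_bigr (fun _ => 1 * w s)); last by move=> *; rewrite mul1n.
rewrite -big_distrl /=.
case H1: [&& x < c, 0 < x, x <= M & sumn s == M - x] => /=; last first.
  rewrite big_pred0 // => y; apply/negP => /andP [/and4P [Hc Hy Hy0 HM] /andP [_ HS]].
  move: H1; rewrite Hc HM HS; lia.
case: ifP => Hd.
  rewrite (eq_bigl (fun y => (head 0 s < y) && (y < x))).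
    by rewrite (_ : iota 0 B = index_iota 0 B) ?count_between ?/index_iota ?subn0 //; lia.
  move=> y; case Hyx: (y < x); last by rewrite /= !(andbF, andFb).
  move: H1 => /and4P [Hc _ HM HS]; rewrite Hc HM HS /= andbT -(Dc_head Hd Hyx).
  by rewrite !andbT.
rewrite big_pred0 // => y; apply/negP => /andP [/and4P [_ Hy Hy0 _] /andP [Hdy _]].
by move: Hd; rewrite (Dc_mono (ltnW Hy) Hdy).
Qed.

Lemma main_ind B w a b
  (Hbase : forall c M, S B a c M = T B w b c M)
  (Hw : forall n, b <= n -> forall x s, size s = n -> w (x :: s) = (x - head 0 s - 1) * w s) :
  forall l c M, S B (2 * l + a) c M = T B w (l + b) c M.
Proof.
elim=> [|l IH] c M; first by rewrite muln0 !add0n.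
rewrite (_ : 2 * l.+1 + a = (2 * l + a).+2); last by lia.
rewrite (_ : l.+1 + b = (l + b).+1); last by lia.
rewrite S_step T_step; last by apply: Hw; lia.
apply: eq_bigr => x _; apply: eq_bigr => y _; by rewrite IH.
Qed.

Lemma base0 B w c M : w [::] = 1 -> S B 0 c M = T B w 0 c M.
Proof. by move=> H; rewrite /S /T /= !big_cons !big_nil /= H. Qed.

Lemma base1 B w c M : (forall x, w [:: x] = 1) -> S B 1 c M = T B w 1 c M.
Proof.
move=> H; rewrite /S /T big_mkcond [RHS]big_mkcond; apply: eq_big_seq => s.
rewrite mem_allseq => /andP [/eqP Hs _].
case: s Hs => [|x [|]] //= _; by rewrite addn0 H.
Qed.

Lemma inD_Dc n B s : size s = n -> all (fun x => x < B) s -> in_D n s = Dc B s.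
Proof.
move=> Hs; rewrite /in_D /Dc /is_partition Hs eqxx andbT.
case: s Hs => [//|x t] _ /= /andP [xB _]; rewrite xB /=.
case Hp: (path gtn x t); rewrite ?andbF ?andbT //.
by rewrite (sub_path _ Hp) // => a b /ltnW.
Qed.

Definition gap2 := (fun a b : nat => b + 2 <= a).

Lemma gapprod_zero s c : Dc c s -> ~~ sorted gap2 s -> gapprod s = 0.
Proof.
elim: s c => [//|x [//|y t] IH] c.
rewrite /Dc /= => /andP [/and3P [xc yx p] /and3P [x0 y0 a]].
rewrite gapprod_cc; case: (leqP (y + 2) x) => H /=.
  move=> Hn; rewrite (IH x) ?muln0 //; first by rewrite /Dc /= yx p y0 a.
  by move: Hn; rewrite /gap2 /= H.
move=> _; rewrite (_ : x - y - 1 = 0) //; lia.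
Qed.

Lemma inP_char m k B s : size s = m -> all (fun x => x < B) s ->
  in_P m k 2 s = [&& Dc B s, (0 < m) ==> (k <= nth 0 s m.-1) & sorted gap2 s].
Proof.
move=> Hs Ha; rewrite /in_P /is_partition Hs eqxx /=.
case Hg: (sorted gap2 s); last by rewrite !andbF.
have Hgt : sorted gtn s by apply: sub_sorted Hg => a b; rewrite /gap2 /=; lia.
have Hge : sorted geq s by apply: sub_sorted Hg => a b; rewrite /gap2 /=; lia.
rewrite Hge /Dc !andbT /=.
suff -> : path gtn B s by [].
by case: s Hs Ha Hgt {Hg Hge} => [//|x t] _ /= /andP [-> _].
Qed.

Lemma rhs_conv B m k w s M : size s = m -> all (fun x => x < B) s ->
 (Dc B s -> ~~ sorted gap2 s -> w s = 0) ->
 (Dc B s -> 0 < m -> nth 0 s m.-1 < k -> w s = 0) ->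
 (if in_P m k 2 s && (psize s == M) then w s else 0)
   = (if Dc B s && (sumn s == M) then w s else 0).
Proof.
move=> Hs Ha H1 H2; rewrite (inP_char k Hs Ha) /psize.
case Hd: (Dc B s) => //=.
case Hg: (sorted gap2 s); rewrite ?andbT ?andbF /=; last by rewrite H1 ?Hg ?if_same.
case Hi: ((0 < m) ==> (k <= nth 0 s m.-1)); first by [].
move/negbT: Hi; rewrite negb_imply -ltnNge => /andP [Hm Hk].
by rewrite H2 ?if_same.
Qed.

Lemma rhs_gf m k M w :
  (forall s, size s = m -> Dc M.+1 s -> ~~ sorted gap2 s -> w s = 0) ->
  (forall s, size s = m -> Dc M.+1 s -> 0 < m -> nth 0 s m.-1 < k -> w s = 0) ->
  gf_coef m M (in_P m k 2) psize w = T M.+1 w m M.+1 M.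
Proof.
move=> H1 H2.
rewrite /gf_coef (tuple_sum m M (fun s => in_P m k 2 s && (psize s == M)) w).
rewrite /T big_mkcond [RHS]big_mkcond; apply: eq_big_seq => s.
rewrite mem_allseq => /andP [/eqP Hs Ha].
by apply: rhs_conv => //; [apply: H1 | apply: H2].
Qed.

Lemma pos_nth c s m : size s = m -> Dc c s -> 0 < m -> 0 < nth 0 s m.-1.
Proof.
move=> Hs /andP [_ /allP Ha] Hm; apply: Ha; apply: mem_nth; by rewrite Hs ltn_predL.
Qed.

Theorem theorem9 (l v : nat) (hv : v <= 1) (M : nat) :
  gf_coef (2 * l + v) M (in_D (2 * l + v)) Ostat (fun _ => 1)
  = gf_coef (l + v) M (in_P (l + v) (2 - v) 2) psize
      (fun s => (1 - v) * omega22 s + v * omega1t s).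
Proof.
have L : forall n, gf_coef n M (in_D n) Ostat (fun _ => 1) = S M.+1 n M.+1 M.
  move=> n.
  rewrite /gf_coef (tuple_sum n M (fun s => in_D n s && (Ostat s == M)) (fun _ => 1)).
  rewrite /S big_mkcond [RHS]big_mkcond; apply: eq_big_seq => s.
  rewrite mem_allseq => /andP [/eqP Hs Ha].
  by rewrite (inD_Dc Hs Ha) OstatE.
rewrite L.
case: v hv => [|[|//]] _.
- rewrite rhs_gf.
  + apply: (main_ind (a := 0) (b := 0)) => [c M'|n _ x s _].
      by apply: base0.
    by rewrite subn0 !mul1n !mul0n !addn0 omega22_cons.
  + move=> [//|x t] _ Hd Hg; rewrite /= subn0 mul1n mul0n addn0 /omega22.
    by rewrite (gapprod_zero Hd Hg) muln0.
  + move=> s Hs Hd Hm Hn; rewrite /= subn0 mul1n mul0n addn0.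
    have := pos_nth Hs Hd Hm.
    case: s Hs Hd Hn => [|x t] Hs _ Hn Hp; first by move: Hm; rewrite -Hs.
    rewrite /omega22 (_ : nth 0 (x :: t) (size (x :: t)).-1 - 1 = 0) //.
    rewrite Hs; lia.
- rewrite rhs_gf.
  + apply: (main_ind (a := 1) (b := 1)) => [c M'|n Hn x s Hs].
      apply: base1 => x; by rewrite /= subnn mul0n add0n mul1n /omega1t gapprod1.
    case: s Hs => [|y t] Hs; first by move: Hn; rewrite -Hs.
    by rewrite /= subnn !mul0n !add0n !mul1n omega1t_cons.
  + move=> s _ Hd Hg; rewrite /= subnn mul0n add0n mul1n /omega1t.
    by rewrite (gapprod_zero Hd Hg).
  + move=> s Hs Hd Hm Hn; have := pos_nth Hs Hd Hm; lia.
Qed.
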